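(* If $T$ and $T'$ are standard tableaux such that $(T,T')$ is a pair of type $D_j(i)$ for some $i\ge1$ and $1\le j\le4$, then $\digamma(T)=q\,\digamma(T')$.
   Context: Tableaux (French convention: rows of lengths $\lambda_1\ge\lambda_2\ge\cdots$ from bottom to top). A tableau is identified with (shape, reading word), the reading word listing the entries row by row from top row to bottom row, each row left to right. Standard tableau of degree $n$: rows increase left to right, columns increase upwards, entries $1,\dots,n$ each once. Cocharge of a standard word $w$ of degree $n$: $c_1=0$, $c_{i+1}=c_i+1$ if $i+1$ is left of $i$ in $w$, else $c_{i+1}=c_i$; $\mathrm{cocharge}(w)=\sum c_i$; the cocharge of a standard tableau is that of its reading word. With $b=a+1$, $c=a+2$, $d=a+3$: $D_1(a)=(bacd,cabd)$, $D_2(a)=(dbac,dcab)$, $D_3(a)=(acdb,abdc)$, $D_4(a)=(cdba,bdca)$. A pair $(T_1,T_2)$ of tableaux is of type $D_j(a)$ if $T_1$ is obtained from $T_2$ by exchanging the letters $b$ and $c$, and the pair of subwords of the reading words of $T_1$ and $T_2$ formed by the letters $a,b,c,d$ equals $D_j(a)$. Plethystic notation: $X=x_1+\cdots+x_N$, $X^t=X(1-t)$, and $S_\mu[X^t]$ is the Schur function with $p_k$ replaced by $p_k[X](1-t^k)$. $\digamma$ sends a standard tableau $T$ to $q^{\mathrm{cocharge}(T)}S_{\mathrm{shape}(T)}[X^t]$. *)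

(* Defs.v *)
From HB Require Import structures.
From mathcomp Require Import all_boot all_order all_algebra.
From mathcomp Require Import mpoly.
Set Implicit Arguments.
Unset Strict Implicit.
Unset Printing Implicit Defensive.
Import Order.TTheory GRing.Theory Num.Theory.

(* Tableaux (French convention), identified with (shape, reading word).   *)
(* shape = [:: l_1; l_2; ...] row lengths from the bottom row upward;      *)
(* reading word = rows listed from the top row to the bottom row, each    *)
(* row read left to right.                                                *)
Definition tableau := (seq nat * seq nat)%type.

Definition shape (T : tableau) : seq nat := T.1.
Definition rword (T : tableau) : seq nat := T.2.

Definition rows (T : tableau) : seq (seq nat) :=
  rev (reshape (rev (shape T)) (rword T)).

(* entry in row r (0 = bottom), column c (0 = leftmost) *)
Definition entry (T : tableau) (r c : nat) : nat := nth 0 (nth [::] (rows T) r) c.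

Definition is_partition (sh : seq nat) : Prop :=
  sorted geq sh /\ all (fun k => 0 < k) sh.

Definition standard (T : tableau) : Prop :=
  [/\ is_partition (shape T),
      size (rword T) = sumn (shape T),
      perm_eq (rword T) (iota 1 (sumn (shape T))),
      (forall r c, r < size (shape T) -> c.+1 < nth 0 (shape T) r ->
         entry T r c < entry T r c.+1) &
      (forall r c, r.+1 < size (shape T) -> c < nth 0 (shape T) r.+1 ->
         entry T r c < entry T r.+1 c)].

Fixpoint cvec (w : seq nat) (i : nat) : nat :=
  match i with
  | 0 => 0
  | 1 => 0
  | (k.+1 as i').+1 => cvec w i' + (index i'.+1 w < index i' w)
  end.

Definition cocharge_word (w : seq nat) : nat :=
  \sum_(1 <= i < (size w).+1) cvec w i.

Definition cocharge (T : tableau) : nat := cocharge_word (rword T).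

Definition Dpair (j a : nat) : seq nat * seq nat :=
  let b := a.+1 in let c := a.+2 in let d := a.+3 in
  match j with
  | 1 => ([:: b; a; c; d], [:: c; a; b; d])
  | 2 => ([:: d; b; a; c], [:: d; c; a; b])
  | 3 => ([:: a; c; d; b], [:: a; b; d; c])
  | 4 => ([:: c; d; b; a], [:: b; d; c; a])
  | _ => ([::], [::])
  end.

Definition swap_letters (x y : nat) (k : nat) : nat :=
  if k == x then y else if k == y then x else k.

Definition pair_of_type (j a : nat) (T1 T2 : tableau) : Prop :=
  [/\ shape T1 = shape T2,
      rword T1 = map (swap_letters a.+1 a.+2) (rword T2),
      [seq k <- rword T1 | k \in [:: a; a.+1; a.+2; a.+3]] = (Dpair j a).1 &
      [seq k <- rword T2 | k \in [:: a; a.+1; a.+2; a.+3]] = (Dpair j a).2].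

Local Open Scope ring_scope.

Definition Kqt := {mpoly int[2]}.
Definition qv : Kqt := 'X_(0 : 'I_2).
Definition tv : Kqt := 'X_(1 : 'I_2).

Definition PX (N : nat) := {mpoly Kqt[N]}.

Definition hcomp (N m : nat) : PX N :=
  \sum_(s : m.-tuple 'I_N | sorted (fun u v : 'I_N => (u <= v)%N) s)
     \prod_(i <- s) 'X_i.

(* h_k[X^t] = h_k[X(1-t)] = sum_j h_{k-j}[X] h_j[-tX]
                          = sum_j (-t)^j e_j(x) h_{k-j}(x),
   i.e. the coefficient of z^k in prod_i (1 - t x_i z)/(1 - x_i z). *)
Definition hplet (N k : nat) : PX N :=
  \sum_(j < k.+1) ((- tv) ^+ j)%:MP * mesym N Kqt j * hcomp N (k - j).

Definition hplet_int (N : nat) (k : int) : PX N :=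
  match k with
  | Posz k => hplet N k
  | Negz _ => 0
  end.

(* S_mu[X^t] via the Jacobi--Trudi determinant det(h_{mu_i - i + j}[X^t]),
   (plethysm by X(1-t) is a ring morphism of symmetric functions). *)
Definition schur_plet (N : nat) (mu : seq nat) : PX N :=
  \det (\matrix_(i < size mu, j < size mu)
          hplet_int N ((nth 0 mu i)%:Z - (i : nat)%:Z + (j : nat)%:Z)).

Definition digamma (N : nat) (T : tableau) : PX N :=
  (qv ^+ cocharge T)%:MP * schur_plet N (shape T).

(* Main.v *)
Require Import Defs.
From mathcomp Require Import all_boot all_order all_algebra.
From mathcomp Require Import mpoly.
From mathcomp Require Import zify.
Local Open Scope ring_scope.

Definition edesc (w : seq nat) (m : nat) : nat := (index m.+1 w < index m w)%N.

Lemma cvecS w m : (0 < m)%N -> cvec w m.+1 = (cvec w m + edesc w m)%N.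
Proof. by case: m. Qed.

Lemma cvec_shift w w' t : (2 <= t)%N ->
  (forall m, (0 < m)%N -> (edesc w m + (m == t) = edesc w' m + (m.+1 == t))%N) ->
  forall k, cvec w k = (cvec w' k + (k == t))%N.
Proof.
move=> t2 H; elim=> [|k IH].
  by have -> : (0 == t) = false by apply/eqP; lia.
case: k IH => [|k] IH.
  by have -> : (1 == t) = false by apply/eqP; lia.
rewrite (@cvecS w k.+1) // IH (@cvecS w' k.+1) // -!addnA; congr (_ + _)%N.
by rewrite addnC H.
Qed.

Lemma sum_eq1 n t : (1 <= t <= n)%N ->
  (\sum_(1 <= i < n.+1) (i == t) = 1)%N.
Proof.
move=> Ht.
rewrite (eq_bigr (fun i => if i == t then 1 else 0)%N); last by move=> i _; case: eqP.
by rewrite -big_mkcond big_nat1_eq ltnS Ht.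
Qed.

Lemma index_filter (L w : seq nat) x y : x \in L -> y \in L ->
  (index x w < index y w)%N =
  (index x [seq k <- w | k \in L] < index y [seq k <- w | k \in L])%N.
Proof.
move=> xL yL; elim: w => [|h w IH] //=.
case hL: (h \in L) => /=.
  by case: eqP => _; case: eqP => _ //=; rewrite ltnS.
have -> : (h == x) = false by apply/negP => /eqP E; rewrite E xL in hL.
have -> : (h == y) = false by apply/negP => /eqP E; rewrite E yL in hL.
by rewrite ltnS.
Qed.

Lemma swap_inv x y k : swap_letters x y (swap_letters x y k) = k.
Proof.
rewrite /swap_letters; case: (eqVneq k x) => [->|kx].
  by rewrite eqxx; case: eqVneq => // ->.
case: (eqVneq k y) => [->|ky]; first by rewrite eqxx.
by rewrite (negbTE kx) (negbTE ky).
Qed.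

Lemma swap_fix x y k : k != x -> k != y -> swap_letters x y k = k.
Proof. by rewrite /swap_letters => /negbTE -> /negbTE ->. Qed.

Lemma index_swap x y k w :
  index (swap_letters x y k) (map (swap_letters x y) w) = index k w.
Proof. by rewrite index_map //; apply: (can_inj (@swap_inv x y)). Qed.

Lemma key j a w w' : (1 <= a)%N -> (1 <= j <= 4)%N ->
  w = map (swap_letters a.+1 a.+2) w' ->
  [seq k <- w | k \in [:: a; a.+1; a.+2; a.+3]] = (Dpair j a).1 ->
  [seq k <- w' | k \in [:: a; a.+1; a.+2; a.+3]] = (Dpair j a).2 ->
  exists t, [/\ (2 <= t)%N, (t <= a.+3)%N &
    forall m, (0 < m)%N -> (edesc w m + (m == t) = edesc w' m + (m.+1 == t))%N].
Proof.
move=> a1 j14 ew f1 f2.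
set L := [:: a; a.+1; a.+2; a.+3] in f1 f2.
have ev : forall v m, m \in L -> m.+1 \in L ->
   edesc v m = (index m.+1 [seq k <- v | k \in L] < index m [seq k <- v | k \in L])%N.
  by move=> v m mL m1L; rewrite /edesc (@index_filter L v _ _ m1L mL).
have aL : a \in L by rewrite !inE eqxx.
have bL : a.+1 \in L by rewrite !inE eqxx orbT.
have cL : a.+2 \in L by rewrite !inE eqxx !orbT.
have dL : a.+3 \in L by rewrite !inE eqxx !orbT.
have other : forall m, m != a -> m != a.+1 -> m != a.+2 -> edesc w m = edesc w' m.
  move=> m ma mb mc; rewrite /edesc ew.
  have h1 : swap_letters a.+1 a.+2 m.+1 = m.+1 by apply: swap_fix; rewrite eqSS.
  have h0 : swap_letters a.+1 a.+2 m = m by apply: swap_fix.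
  by rewrite -(index_swap a.+1 a.+2 m.+1 w') -(index_swap a.+1 a.+2 m w') h1 h0.
have ne : forall p q : nat, p != q -> (p == q) = false by move=> p q /negbTE.
have n10 : (a.+1 == a) = false by apply/ne; lia.
have n01 : (a == a.+1) = false by apply/ne; lia.
have n20 : (a.+2 == a) = false by apply/ne; lia.
have n02 : (a == a.+2) = false by apply/ne; lia.
have n30 : (a.+3 == a) = false by apply/ne; lia.
have n03 : (a == a.+3) = false by apply/ne; lia.
have n21 : (a.+2 == a.+1) = false by apply/ne; lia.
have n12 : (a.+1 == a.+2) = false by apply/ne; lia.
have n31 : (a.+3 == a.+1) = false by apply/ne; lia.
have n13 : (a.+1 == a.+3) = false by apply/ne; lia.
have n32 : (a.+3 == a.+2) = false by apply/ne; lia.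
have n23 : (a.+2 == a.+3) = false by apply/ne; lia.
have gen : forall t, (t == a.+1) || (t == a.+2) ->
   (edesc w a + (a == t) = edesc w' a + (a.+1 == t))%N ->
   (edesc w a.+1 + (a.+1 == t) = edesc w' a.+1 + (a.+2 == t))%N ->
   (edesc w a.+2 + (a.+2 == t) = edesc w' a.+2 + (a.+3 == t))%N ->
   exists t, [/\ (2 <= t)%N, (t <= a.+3)%N &
    forall m, (0 < m)%N -> (edesc w m + (m == t) = edesc w' m + (m.+1 == t))%N].
  move=> t tbc Ha Hb Hc; exists t; split; [by case/orP: tbc => /eqP ->; lia
                                     | by case/orP: tbc => /eqP ->; lia|].
  move=> m m0.
  case: (boolP (m \in [:: a; a.+1; a.+2])) => [|mn]; first by rewrite !inE => /or3P [] /eqP ->.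
  move: mn; rewrite !inE !negb_or => /and3P [ma mb mc].
  rewrite other //.
  have -> : (m == t) = false by case/orP: tbc => /eqP ->; apply/ne; lia.
  have -> : (m.+1 == t) = false.
    by case/orP: tbc => /eqP ->; apply/ne; move: ma mb mc => /eqP ? /eqP ? /eqP ?; lia.
  by [].
have E : forall m, m \in [:: a; a.+1; a.+2] ->
   edesc w m = (index m.+1 (Dpair j a).1 < index m (Dpair j a).1)%N /\
   edesc w' m = (index m.+1 (Dpair j a).2 < index m (Dpair j a).2)%N.
  move=> m; rewrite !inE => /or3P [] /eqP ->; rewrite !ev // -f1 -f2 //.
move: j14 E f1 f2; case: j => [|[|[|[|[|j]]]]] //= _ E _ _.
all: have [Ea Ea'] := E a (mem_head _ _).
all: have [Eb Eb'] := E a.+1 ltac:(by rewrite !inE eqxx orbT).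
all: have [Ec Ec'] := E a.+2 ltac:(by rewrite !inE eqxx !orbT).
all: rewrite /= ?eqxx ?n10 ?n01 ?n20 ?n02 ?n30 ?n03 ?n21 ?n12 ?n31 ?n13 ?n32 ?n23 /= in Ea Ea' Eb Eb' Ec Ec'.
- by apply: (gen a.+1); rewrite ?eqxx ?Ea ?Ea' ?Eb ?Eb' ?Ec ?Ec' ?n10 ?n01 ?n20 ?n02 ?n30 ?n03 ?n21 ?n12 ?n31 ?n13 ?n32 ?n23.
- by apply: (gen a.+1); rewrite ?eqxx ?Ea ?Ea' ?Eb ?Eb' ?Ec ?Ec' ?n10 ?n01 ?n20 ?n02 ?n30 ?n03 ?n21 ?n12 ?n31 ?n13 ?n32 ?n23.
- by apply: (gen a.+2); rewrite ?eqxx ?orbT ?Ea ?Ea' ?Eb ?Eb' ?Ec ?Ec' ?n10 ?n01 ?n20 ?n02 ?n30 ?n03 ?n21 ?n12 ?n31 ?n13 ?n32 ?n23.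
- by apply: (gen a.+2); rewrite ?eqxx ?orbT ?Ea ?Ea' ?Eb ?Eb' ?Ec ?Ec' ?n10 ?n01 ?n20 ?n02 ?n30 ?n03 ?n21 ?n12 ?n31 ?n13 ?n32 ?n23.
Qed.

Theorem lemma23 (N : nat) (T T' : tableau) (i j : nat) :
  standard T -> standard T' ->
  (1 <= i)%N -> (1 <= j <= 4)%N ->
  pair_of_type j i T T' ->
  digamma N T = qv%:MP * digamma N T'.
Proof.
move=> _ [_ sz pe _ _] i1 j14 [esh ew f1 f2].
have [t [t2 t3 Ht]] := @key j i _ _ i1 j14 ew f1 f2.
have cv := @cvec_shift _ _ _ t2 Ht.
have dmem : i.+3 \in rword T'.
  have : i.+3 \in [seq k <- rword T' | k \in [:: i; i.+1; i.+2; i.+3]].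
    by rewrite f2; clear f1; move: j14 f2; case: j => [|[|[|[|[|j]]]]] //= _ _; rewrite !inE eqxx ?orbT.
  by rewrite mem_filter => /andP [].
have dle : (i.+3 <= size (rword T'))%N.
  by move: dmem; rewrite (perm_mem pe) mem_iota sz; lia.
have cc : cocharge T = (cocharge T').+1.
  rewrite /cocharge /cocharge_word ew size_map -ew.
  rewrite (eq_bigr (fun k => cvec (rword T') k + (k == t))%N); last by move=> k _; rewrite cv.
  by rewrite big_split /= sum_eq1 ?addn1 //; apply/andP; split; lia.
by rewrite /digamma cc esh GRing.exprS mpolyCM GRing.mulrA.
Qed.
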